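(* For all integers $n_0\geq 3$ and $\Delta\geq 3$, there is a $\Delta$-regular graph $G$ of order $n\geq n_0$ with $$Mo(G)\geq \frac{\Delta}{2}n^2-\left(20\Delta^3+12\Delta^2-24\Delta+48\right)n\log_{(\Delta-1)}(n).$$
   Context: All graphs are finite and simple. For a graph $G$ and an edge $uv$ of $G$, $n_G(u,v)$ denotes the number of vertices of $G$ whose distance in $G$ to $u$ is smaller than their distance to $v$. The Mostar index of $G$ is $Mo(G)=\sum_{uv\in E(G)}|n_G(u,v)-n_G(v,u)|$. *)

(* Defs.v *)
From mathcomp Require Import all_boot.
From Stdlib Require Import Reals.

Set Implicit Arguments.
Unset Strict Implicit.
Unset Printing Implicit Defensive.

Section Graphs.
Variable T : finType.

Definition simple_graph (e : rel T) : Prop := symmetric e /\ irreflexive e.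

Definition regular (e : rel T) (Delta : nat) : Prop :=
  forall v : T, #|[set w | e v w]| = Delta.

Fixpoint ball (e : rel T) (k : nat) (x : T) : {set T} :=
  match k with
  | 0 => [set x]
  | k'.+1 => ball e k' x :|: [set y | [exists z in ball e k' x, e z y]]
  end.

(* Graph distance: Some d if y is reachable from x (d = least k with
   y in ball e k x; any finite distance is < #|T|), None = infinite. *)
Definition dist (e : rel T) (x y : T) : option nat :=
  let k := find (fun k => y \in ball e k x) (iota 0 #|T|) in
  if k < #|T| then Some k else None.

(* strict comparison of extended naturals (None = +infinity) *)
Definition olt (a b : option nat) : bool :=
  match a, b with
  | Some m, Some n => m < n
  | Some _, None => true
  | None, _ => false
  end.

Definition nG (e : rel T) (u v : T) : nat :=
  #|[set w | olt (dist e w u) (dist e w v)]|.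

Definition absdiff (a b : nat) : nat := (a - b) + (b - a).

End Graphs.

Definition mostar (n : nat) (e : rel 'I_n) : nat :=
  \sum_(u : 'I_n) \sum_(v : 'I_n | (u < v) && e u v)
     absdiff (nG e u v) (nG e v u).

(* Main.v *)
Require Import Defs.
From mathcomp Require Import all_boot zify.
From Stdlib Require Import Reals Lra.
Notation dist := Defs.dist (only parsing).
Set Implicit Arguments. Unset Strict Implicit. Unset Printing Implicit Defensive.

Section Gen.
Variable T : finType.
Variable e : rel T.

Definition Fb (S : {set T}) : {set T} := S :|: [set y | [exists z in S, e z y]].

Lemma ballS k x : ball e k.+1 x = Fb (ball e k x).
Proof. by []. Qed.

Lemma ball0 x y : (y \in ball e 0 x) = (y == x).
Proof. by rewrite /= inE. Qed.

Lemma ball_sub k x : ball e k x \subset ball e k.+1 x.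
Proof. by rewrite ballS /Fb subsetUl. Qed.

Lemma ball_mono i j x : i <= j -> ball e i x \subset ball e j x.
Proof.
move=> /subnKC <-; elim: (j - i) => [|d IH]; first by rewrite addn0.
by apply: subset_trans IH _; rewrite addnS; apply: ball_sub.
Qed.

Lemma ball_monoP i j x y : i <= j -> y \in ball e i x -> y \in ball e j x.
Proof. by move=> /(ball_mono x) /subsetP; apply. Qed.

Lemma ball_edge k x y z : y \in ball e k x -> e y z -> z \in ball e k.+1 x.
Proof.
move=> Hy Hyz; rewrite ballS /Fb inE; apply/orP; right.
by rewrite inE; apply/existsP; exists y; rewrite Hy Hyz.
Qed.

Lemma ballSP k x z : z \in ball e k.+1 x ->
  z \in ball e k x \/ exists2 y, y \in ball e k x & e y z.
Proof.
rewrite ballS /Fb inE => /orP [H|]; first by left.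
by rewrite inE => /existsP [y /andP [H1 H2]]; right; exists y.
Qed.

Lemma ball_trans i j x y z : y \in ball e i x -> z \in ball e j y -> z \in ball e (i + j) x.
Proof.
move=> Hy; elim: j z => [|j IH] z.
  by rewrite ball0 addn0 => /eqP ->.
move/ballSP => [H|[w Hw Hwz]].
  by rewrite addnS; apply: (subsetP (ball_sub _ _)); apply: IH.
by rewrite addnS; apply: ball_edge (IH _ Hw) Hwz.
Qed.

Lemma ball_id k x : x \in ball e k x.
Proof. by apply: (@ball_monoP 0); rewrite ?ball0. Qed.

Lemma ball1 x y : e x y -> y \in ball e 1 x.
Proof. by move=> H; apply: ball_edge H; rewrite ball0. Qed.

Lemma ball_sym (esym : symmetric e) k x y : y \in ball e k x -> x \in ball e k y.
Proof.
elim: k y => [|k IH] y; first by rewrite !ball0 eq_sym.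
move/ballSP => [/IH H|[z /IH Hz Hzy]]; first exact: (subsetP (ball_sub _ _)).
by rewrite -add1n; apply: ball_trans Hz; apply: ball1; rewrite esym.
Qed.

Definition reach x y := exists k, y \in ball e k x.

Lemma reach_refl x : reach x x.
Proof. by exists 0; rewrite ball0. Qed.

Lemma reach_trans x y z : reach x y -> reach y z -> reach x z.
Proof. by move=> [i Hi] [j Hj]; exists (i + j); apply: ball_trans Hj. Qed.

Lemma reach_edge x y z : e x y -> reach y z -> reach x z.
Proof. by move=> H; apply: reach_trans; exists 1; apply: ball1. Qed.

Lemma reach_sym (esym : symmetric e) x y : reach x y -> reach y x.
Proof. by move=> [k H]; exists k; apply: ball_sym. Qed.

Lemma ball_stab i x : ball e i.+1 x = ball e i x -> forall j, ball e (i + j) x = ball e i x.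
Proof.
move=> H; elim=> [|j IH]; first by rewrite addn0.
by rewrite addnS ballS IH -ballS.
Qed.

Lemma ball_card_lt x y m : y \in ball e m x -> (forall i, i < m -> y \notin ball e i x) ->
  m < #|T|.
Proof.
move=> Hy Hmin.
have Hc : forall i, i <= m -> i < #|ball e i x|.
  elim=> [|i IH] Hi; first by apply/card_gt0P; exists x; rewrite ball0.
  have Hi' : i < m by [].
  have Hpr : ball e i x \proper ball e i.+1 x.
    rewrite properEneq ball_sub andbT; apply/eqP => Heq.
    have := ball_stab (esym Heq) (m - i); rewrite subnKC; last exact: ltnW.
    by move=> Hs; move: Hy; rewrite Hs => Hy; move: (Hmin i Hi'); rewrite Hy.
  by apply: leq_trans (proper_card Hpr); rewrite ltnS IH // ltnW.
by apply: leq_trans (Hc m (leqnn m)) (max_card _).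
Qed.

Lemma find_iota (p : pred nat) m N : p m -> m < N -> (forall i, i < m -> ~~ p i) ->
  find p (iota 0 N) = m.
Proof.
move=> Hm HmN Hlt.
have -> : iota 0 N = iota 0 m ++ m :: iota m.+1 (N - m.+1).
  by rewrite -[in LHS](subnKC (ltnW HmN)) iotaD add0n -(subnSK HmN).
rewrite find_cat /= Hm.
have -> : has p (iota 0 m) = false.
  apply/negP => /hasP [i]; rewrite mem_iota add0n => /andP [_ Hi] Hp.
  by move: (Hlt i Hi); rewrite Hp.
by rewrite size_iota addn0.
Qed.

Section Conn.
Hypothesis conn : forall x y, exists k, y \in ball e k x.

Definition dd x y : nat := ex_minn (conn x y).

Lemma dd_ball x y : y \in ball e (dd x y) x.
Proof. by rewrite /dd; case: ex_minnP. Qed.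

Lemma dd_le x y k : y \in ball e k x -> dd x y <= k.
Proof. by rewrite /dd; case: ex_minnP => m _ H /H. Qed.

Lemma dd_min x y i : i < dd x y -> y \notin ball e i x.
Proof. by move=> H; apply/negP => /dd_le; rewrite leqNgt H. Qed.

Lemma dist_dd x y : dist e x y = Some (dd x y).
Proof.
have Hlt : dd x y < #|T|.
  by apply: (ball_card_lt (dd_ball x y)) => i /dd_min.
rewrite /dist (find_iota (m := dd x y)) ?Hlt //; first exact: dd_ball.
by move=> i /dd_min.
Qed.

Lemma dd_tri x y z : dd x z <= dd x y + dd y z.
Proof. by apply: dd_le; apply: ball_trans (dd_ball _ _) (dd_ball _ _). Qed.

Lemma dd_edge x y : e x y -> dd x y <= 1.
Proof. by move=> H; apply: dd_le; apply: ball1. Qed.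

Lemma dd_edge_tri x y z : e x y -> dd x z <= (dd y z).+1.
Proof. by move=> H; apply: leq_trans (dd_tri x y z) _; rewrite -add1n leq_add2r dd_edge. Qed.

Lemma dd_refl x : dd x x = 0.
Proof. by apply/eqP; rewrite -leqn0; apply: dd_le; rewrite ball0. Qed.

Lemma dd_eq0 x y : dd x y = 0 -> y = x.
Proof. by move=> H; have := dd_ball x y; rewrite H ball0 => /eqP. Qed.

Lemma dd_eq1 x y : dd x y = 1 -> e x y.
Proof.
move=> H; have := dd_ball x y; rewrite H => /ballSP [|[z]].
  by move/dd_le; rewrite H.
by rewrite ball0 => /eqP ->.
Qed.

Lemma nG_dd u v : nG e u v = #|[set w | dd w u < dd w v]|.
Proof. by apply: eq_card => w; rewrite !inE !dist_dd. Qed.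

Lemma cross_ball (S : {set T}) w y k : w \notin S -> y \in S -> y \in ball e k w ->
  exists o r i j, [/\ o \notin S, r \in S, e o r, o \in ball e i w &
       (y \in ball e j r) /\ i + j < k].
Proof.
move=> Hw; elim: k y => [|k IH] y Hy.
  by rewrite ball0 => /eqP Hyw; move: Hw; rewrite -Hyw Hy.
move/ballSP => [Hb|[z Hz Hzy]].
  have [o [r [i [j [H1 H2 H3 H4 [H5 H6]]]]]] := IH y Hy Hb.
  by exists o, r, i, j; split => //; split => //; rewrite ltnS ltnW.
case: (boolP (z \in S)) => HzS.
  have [o [r [i [j [H1 H2 H3 H4 [H5 H6]]]]]] := IH z HzS Hz.
  exists o, r, i, j.+1; split => //; split; first exact: ball_edge H5 Hzy.
  by rewrite addnS ltnS.
by exists z, y, k, 0; split => //; split; rewrite ?ball0 ?addn0.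
Qed.

Lemma cross (S : {set T}) w y : w \notin S -> y \in S ->
  exists o r, [/\ o \notin S, r \in S, e o r & dd w o + (dd r y).+1 <= dd w y].
Proof.
move=> Hw Hy.
have [o [r [i [j [H1 H2 H3 H4 [H5 H6]]]]]] := cross_ball Hw Hy (dd_ball w y).
exists o, r; split => //.
by apply: leq_trans H6; rewrite addnS ltnS leq_add // dd_le.
Qed.

Variable col : T -> bool.
Hypothesis ecol : forall x y, e x y -> col x != col y.

Lemma ball_par k x y : y \in ball e k x ->
  exists j, [/\ j <= k, y \in ball e j x & odd j = (col x != col y)].
Proof.
elim: k y => [|k IH] y.
  by rewrite ball0 => /eqP ->; exists 0; split; rewrite ?ball0 ?eqxx.
move/ballSP => [/IH [j [H1 H2 H3]]|[z /IH [j [H1 H2 H3]] Hzy]].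
  by exists j; split => //; rewrite ltnW.
exists j.+1; split => //; first exact: ball_edge H2 Hzy.
move: (ecol Hzy) H3; rewrite /= => /negPf.
by case: (col x); case: (col y); case: (col z) => //= _ ->.
Qed.

Lemma dd_par x y : odd (dd x y) = (col x != col y).
Proof.
have [j [H1 H2 H3]] := ball_par (dd_ball x y).
by have := dd_le H2 => H4; have -> : dd x y = j by apply/eqP; rewrite eqn_leq H1 H4.
Qed.

Lemma dd_ge3 x y : col x != col y -> ~~ e x y -> 3 <= dd x y.
Proof.
move=> Hc He; have Ho := dd_par x y; rewrite Hc in Ho.
case Hd: (dd x y) => [|[|[|d]]] //; rewrite Hd in Ho => //.
by move: He; rewrite dd_eq1.
Qed.


Lemma cost_of (x y : T) (P : {set T}) :
  (forall w, w \notin P -> dd w x < dd w y) ->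
  #|T| - absdiff (nG e x y) (nG e y x) <= 2 * #|P|.
Proof.
move=> H; rewrite !nG_dd.
set A := [set w | dd w x < dd w y]; set B := [set w | dd w y < dd w x].
have H1 : #|~: P| <= #|A|.
  by apply: subset_leq_card; apply/subsetP => w; rewrite !inE => /H.
have H2 : #|B| <= #|~: A|.
  apply: subset_leq_card; apply/subsetP => w; rewrite !inE => H3.
  by rewrite -leqNgt ltnW.
have E1 := cardsC P; have E2 := cardsC A; rewrite /absdiff.
move: H1 H2 E1 E2; move: #|A| #|B| #|P| #|T| #|~: A| #|~: P| => nA nB nP nT nCA nCP.
clear; move=> H1 H2 E1 E2; lia.
Qed.

Lemma absdiffC p q : absdiff p q = absdiff q p.
Proof. by rewrite /absdiff addnC. Qed.

Section Hang.
Variables (S P : {set T}) (a b a2 b2 : T).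
Hypothesis Hab : e a b.
Hypothesis Ha2 : e a2 a.
Hypothesis Hcross : forall o r, o \notin S -> r \in S -> e o r ->
  (o = a2 /\ r = a) \/ (o = b2 /\ r = b).
Hypothesis HSP : S \subset P.
Hypothesis HP : forall w, w \notin P -> dd w a2 < dd w b2.

Lemma closer x y w : y \in S -> w \notin P -> dd a x < dd a y -> dd w x < dd w y.
Proof.
move=> Hy Hw Hxy.
have HwS : w \notin S by apply: contra Hw; apply: (subsetP HSP).
have Hx : dd w x <= dd w a2 + (dd a x).+1.
  by apply: leq_trans (dd_tri w a2 x) _; rewrite leq_add2l dd_edge_tri.
have [o [r [Ho Hr Hor Hd]]] := cross HwS Hy.
case: (Hcross Ho Hr Hor) => [[Eo Er]|[Eo Er]]; subst o r.
  move: Hd Hx Hxy; move: (dd w x) (dd w y) (dd w a2) (dd a x) (dd a y) => p1 p2 p3 p4 p5.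
  clear; lia.
have := HP Hw; have := dd_edge_tri y Hab; move: Hd Hx Hxy.
move: (dd w x) (dd w y) (dd w a2) (dd a x) (dd a y) (dd w b2) (dd b y) => p1 p2 p3 p4 p5 p6 p7.
clear; lia.
Qed.

Lemma cost_hang x y : x \in S -> y \in S -> e x y ->
  #|T| - absdiff (nG e x y) (nG e y x) <= 2 * #|P|.
Proof.
move=> Hx Hy Hxy.
have Hp : dd a x != dd a y.
  apply/negP => /eqP Heq; have := dd_par a x; rewrite Heq dd_par.
  by move: (ecol Hxy); case: (col a); case: (col x); case: (col y).
case: (ltngtP (dd a x) (dd a y)) Hp => // Hlt _.
  by apply: cost_of => w Hw; apply: closer.
by rewrite absdiffC; apply: cost_of => w Hw; apply: closer.
Qed.

Lemma hang_D z1 z2 : z2 \in S ->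
  dd a z1 < dd a z2 -> dd b z1 < dd b z2 ->
  forall w, w \notin S -> dd w z1 < dd w z2.
Proof.
move=> Hz2 H1 H2 w Hw.
have [o [r [Ho Hr Hor Hd]]] := cross Hw Hz2.
have Hz1 := leq_trans (dd_tri w o z1) (leq_add (leqnn _) (dd_edge_tri z1 Hor)).
case: (Hcross Ho Hr Hor) => [[Eo Er]|[Eo Er]]; subst o r; move: Hz1 Hd.
  move: H1 H2; move: (dd a z1) (dd a z2) (dd b z1) (dd b z2) (dd w z1) (dd w z2) (dd w a2) => p1 p2 p3 p4 p5 p6 p7.
  clear; lia.
move: H1 H2; move: (dd a z1) (dd a z2) (dd b z1) (dd b z2) (dd w z1) (dd w z2) (dd w b2) => p1 p2 p3 p4 p5 p6 p7.
clear; lia.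
Qed.

End Hang.
End Conn.
End Gen.

Lemma ball_hom (T1 T2 : finType) (e1 : rel T1) (e2 : rel T2) (h : T1 -> T2) :
  (forall u v, e1 u v -> e2 (h u) (h v)) ->
  forall k x y, y \in ball e1 k x -> h y \in ball e2 k (h x).
Proof.
move=> Hh; elim=> [|k IH] x y; first by rewrite !ball0 => /eqP ->.
move/ballSP => [/IH H|[z /IH Hz Hzy]]; first exact: (ball_monoP (leqnSn k) H).
exact: ball_edge Hz (Hh _ _ Hzy).
Qed.

Lemma reach_hom (T1 T2 : finType) (e1 : rel T1) (e2 : rel T2) (h : T1 -> T2) :
  (forall u v, e1 u v -> e2 (h u) (h v)) ->
  forall x y, reach e1 x y -> reach e2 (h x) (h y).
Proof. by move=> Hh x y [k H]; exists k; apply: (ball_hom Hh). Qed.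

Lemma eq_inl (A B : eqType) (a b : A) : (inl a == inl b :> A + B) = (a == b).
Proof. by apply/eqP/eqP => [[]|->]. Qed.
Lemma eq_inr (A B : eqType) (a b : B) : (inr a == inr b :> A + B) = (a == b).
Proof. by apply/eqP/eqP => [[]|->]. Qed.
Lemma eq_inlr (A B : eqType) (a : A) (b : B) : (inl a == inr b :> A + B) = false.
Proof. by []. Qed.
Lemma eq_inrl (A B : eqType) (a : A) (b : B) : (inr b == inl a :> A + B) = false.
Proof. by []. Qed.
Definition sumE := (eq_inl, eq_inr, eq_inlr, eq_inrl, xpair_eqE).

Section Cons.
Variable r' : nat.
Local Notation r := r'.+1.
Local Notation K := (bool * 'I_r)%type.
Local Notation L := (bool + K + K + K)%type.
Notation LP s := (inl (inl (inl s))).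
Notation LA s i := (inl (inl (inr (s, i)))).
Notation LX s i := (inl (inr (s, i))).
Notation LC s i := (inr (s, i)).

Definition ladj (leaf : bool) (u v : L) : bool :=
  match u, v with
  | LP s, LP s' => s != s'
  | LP s, LA s' _ => s == s'
  | LA s _, LP s' => s == s'
  | LA s _, LX s' _ => s == s'
  | LX s _, LA s' _ => s == s'
  | LX s i, LX s' i' => (s != s') && (i == i')
  | LX s i, LC s' i' => (s != s') && (i == i')
  | LC s i, LX s' i' => (s != s') && (i == i')
  | LC s _, LC s' _ => s != s'
  | LA s i, LC s' i' => [&& leaf, s == s' & i == i']
  | LC s i, LA s' i' => [&& leaf, s == s' & i == i']
  | _, _ => false
  end.

Definition lcol (u : L) : bool :=
  match u with LP s => s | LA s _ => ~~ s | LX s _ => s | LC s _ => s end.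

Fixpoint V (m : nat) : finType :=
  match m with 0 => L | m'.+1 => (L + K * V m')%type end.

Definition pa (m : nat) : V m := match m return V m with 0 => LP false | m'.+1 => inl (LP false) end.
Definition pb (m : nat) : V m := match m return V m with 0 => LP true | m'.+1 => inl (LP true) end.

Definition crossadj m (l : L) (c : K) (w : V m) : bool :=
  if w == pa m then l == LA c.1 c.2 else if w == pb m then l == LC c.1 c.2 else false.

Fixpoint ev (m : nat) : rel (V m) :=
  match m return rel (V m) with
  | 0 => ladj true
  | m'.+1 => fun u v =>
     match u, v with
     | inl l, inl l' => ladj false l l'
     | inl l, inr (c, w) => crossadj l c w
     | inr (c, w), inl l => crossadj l c w
     | inr (c, w), inr (c', w') => (c == c') && ev w w'
     end
  end.

Fixpoint cv (m : nat) : V m -> bool :=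
  match m return V m -> bool with
  | 0 => lcol
  | m'.+1 => fun u => match u with inl l => lcol l | inr (c, w) => c.1 (+) cv w end
  end.

Lemma ladj_sym leaf : symmetric (ladj leaf).
Proof.
case=> [[[s|[s i]]|[s i]]|[s i]] [[[s'|[s' i']]|[s' i']]|[s' i']] //=;
  by rewrite ?(eq_sym s) ?(eq_sym i).
Qed.

Lemma ladj_irr leaf : irreflexive (ladj leaf).
Proof. by case=> [[[s|[s i]]|[s i]]|[s i]] //=; rewrite eqxx ?andbF. Qed.

Lemma ladj_col leaf u v : ladj leaf u v -> lcol u != lcol v.
Proof.
case: u v => [[[s|[s i]]|[s i]]|[s i]] [[[s'|[s' i']]|[s' i']]|[s' i']] //=;
 case: s s' => [] [] //=; by rewrite ?andbF.
Qed.

Lemma pa_pb m : pa m != pb m.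
Proof. by case: m. Qed.

Lemma ev_sym m : symmetric (@ev m).
Proof.
elim: m => [|m IH]; first exact: ladj_sym.
case=> [l|[c w]] [l'|[c' w']]; rewrite /=.
- exact: ladj_sym.
- by [].
- by [].
- by rewrite eq_sym IH.
Qed.

Lemma ev_irr m : irreflexive (@ev m).
Proof.
elim: m => [|m IH]; first exact: ladj_irr.
case=> [l|[c w]]; rewrite /=.
- exact: ladj_irr.
- by rewrite IH andbF.
Qed.

Lemma cv_pa m : cv (pa m) = false. Proof. by case: m. Qed.
Lemma cv_pb m : cv (pb m) = true. Proof. by case: m. Qed.

Lemma ev_col m u v : @ev m u v -> cv u != cv v.
Proof.
elim: m u v => [|m IH]; first exact: ladj_col.
case=> [l|[[s i] w]] [l'|[[s' i'] w']]; rewrite /=; first exact: ladj_col.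
- rewrite /crossadj; case: ifP => [/eqP -> /eqP ->|_]; first by rewrite cv_pa; case: s'.
  by case: ifP => [/eqP -> /eqP ->|]; first by rewrite cv_pb; case: s'.
- rewrite /crossadj; case: ifP => [/eqP -> /eqP ->|_]; first by rewrite cv_pa; case: s.
  by case: ifP => [/eqP -> /eqP ->|]; first by rewrite cv_pb; case: s.
- case/andP => /eqP [-> _] /IH; by case: s'; case: (cv w); case: (cv w').
Qed.

End Cons.

Section Deg.
Variable r' : nat.
Local Notation r := r'.+1.
Local Notation K := (bool * 'I_r)%type.
Local Notation L := (bool + K + K + K)%type.
Local Notation pa := (@pa r').
Local Notation pb := (@pb r').
Local Notation ev m := (@ev r' m).
Local Notation cv := (@cv r').
Local Notation ladj leaf := (@ladj r' leaf).
Local Notation V := (V r').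
Notation LP s := (inl (inl (inl s))).
Notation LA s i := (inl (inl (inr (s, i)))).
Notation LX s i := (inl (inr (s, i))).
Notation LC s i := (inr (s, i)).

Lemma sumK (P : pred K) (F : K -> nat) :
  \sum_(c | P c) F c = \sum_(i | P (true, i)) F (true, i) + \sum_(i | P (false, i)) F (false, i).
Proof.
rewrite (eq_bigl (fun c => true && P (c.1, c.2))); last by case.
rewrite (eq_bigr (fun c => F (c.1, c.2))); last by case.
by rewrite -(pair_big_dep xpredT (fun a b => P (a, b)) (fun a b => F (a, b))) big_bool.
Qed.

Lemma sumB (P : pred bool) (F : bool -> nat) :
  \sum_(b | P b) F b = (if P true then F true else 0) + (if P false then F false else 0).
Proof. by rewrite big_mkcond big_bool. Qed.

Lemma sumI_true : \sum_(i < r | true) 1 = r.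
Proof. by rewrite sum1_card card_ord. Qed.
Lemma sumI_false : \sum_(i < r | false) 1 = 0.
Proof. by rewrite big_pred0. Qed.
Lemma sumI_eq (j : 'I_r) : \sum_(i < r | j == i) 1 = 1.
Proof. by rewrite (eq_bigl (fun i => i == j)) ?big_pred1_eq // => i; rewrite eq_sym. Qed.
Lemma sumI_eq' (j : 'I_r) : \sum_(i < r | i == j) 1 = 1.
Proof. by rewrite big_pred1_eq. Qed.

Definition ldeg (leaf : bool) (l : L) : nat :=
  match l with LP _ => r.+1 | LA _ _ => r.+1 + leaf | LX _ _ => r.+2 | LC _ _ => r.+1 + leaf end.

Lemma ladj_deg leaf l : \sum_(v | ladj leaf l v) 1 = ldeg leaf l.
Proof.
rewrite !big_sumType sumB !sumK.
case: l => [[[s|[s i]]|[s i]]|[s i]]; case: s; case: leaf => /=;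
  rewrite ?sumI_true ?sumI_false ?sumI_eq ?sumI_eq' ?big_pred0 //; lia.
Qed.

Lemma sumP (A B : finType) (P : pred (A * B)) (F : A * B -> nat) :
  \sum_(x | P x) F x = \sum_a \sum_(b | P (a, b)) F (a, b).
Proof.
rewrite (pair_big_dep xpredT (fun a b => P (a, b)) (fun a b => F (a, b))).
by apply: eq_big => [[a b]|[a b]].
Qed.

Lemma sum_pa_pb m (X Y : bool) :
  \sum_(w : V m | if w == pa m then X else if w == pb m then Y else false) 1 = X + Y.
Proof.
have Hab := pa_pb r' m.
rewrite big_mkcond (bigD1 (pa m)) //= eqxx (bigD1 (pb m)) /=; last by rewrite eq_sym.
rewrite eqxx eq_sym (negbTE Hab) big1 ?addn0; first by case: X; case: Y.
by move=> w /andP [H1 H2]; rewrite (negbTE H1) (negbTE H2).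
Qed.


Lemma sumK' (F : K -> nat) : \sum_c F c = \sum_i F (true, i) + \sum_i F (false, i).
Proof. by rewrite (sumK xpredT). Qed.

Lemma sumI_eqn (j : 'I_r) : \sum_(i < r) (j == i : nat) = 1.
Proof. by rewrite (bigD1 j) //= eqxx big1 // => i /negbTE; rewrite eq_sym => ->. Qed.

Lemma ev_deg m u : \sum_(v | ev m u v) 1 + (u == pa m) + (u == pb m) = r'.+3.
Proof.
elim: m u => [|m IH] u.
  rewrite /= ladj_deg; case: u => [[[s|[s i]]|[s i]]|[s i]]; case: s => /=; lia.
case: u => [l|[c w]].
  rewrite big_sumType /= ladj_deg sumP.
  rewrite (eq_bigr (fun c => (l == LA c.1 c.2) + (l == LC c.1 c.2))); last first.
    by move=> c _; rewrite sum_pa_pb.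
  rewrite sumK' /=.
  case: l => [[[s|[s i]]|[s i]]|[s i]] /=.
  - by rewrite !big1 //; case: s => /=; lia.
  - do 5 rewrite ?eqE /=; case: s => /=;
      rewrite ?big_split /= ?sumI_eqn ?big1 //; lia.
  - rewrite !big1 //; lia.
  - do 5 rewrite ?eqE /=; case: s => /=;
      rewrite ?big_split /= ?sumI_eqn ?big1 //; lia.
have H1 : \sum_(l | crossadj l c w) 1 = (w == pa m) + (w == pb m).
  have Hab := pa_pb r' m.
  rewrite /crossadj; case Ha: (w == pa m) => /=.
    by move/eqP: Ha => ->; rewrite big_pred1_eq (negbTE Hab).
  case Hb: (w == pb m) => /=; first by rewrite big_pred1_eq.
  by rewrite big_pred0.
have H2 : \sum_(p | ev m.+1 (inr (c, w)) (inr p)) 1 = \sum_(v | ev m w v) 1.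
  rewrite sumP (bigD1 c) //= eqxx /= [X in _ + X]big1 ?addn0 //.
  move=> c' Hc'; rewrite big_pred0 // => w'; by rewrite eq_sym (negbTE Hc').
rewrite big_sumType /= H1 H2.
by rewrite -(IH w) !addn0 [LHS]addnC addnA.
Qed.

Lemma crossadj_sum m (c : K) (w : V m) :
  \sum_(l | crossadj l c w) 1 = (w == pa m) + (w == pb m).
Proof.
have Hab := pa_pb r' m.
rewrite /crossadj; case Ha: (w == pa m) => /=.
  by move/eqP: Ha => ->; rewrite big_pred1_eq (negbTE Hab).
case Hb: (w == pb m) => /=; first by rewrite big_pred1_eq.
by rewrite big_pred0.
Qed.

Lemma sum_inner m (c : K) (w : V m) (G : K * V m -> nat) :
  \sum_(q | ev m.+1 (inr (c, w)) (inr q)) G q = \sum_(w' | ev m w w') G (c, w').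
Proof.
rewrite sumP (bigD1 c) //= eqxx /= [X in _ + X]big1 ?addn0 //.
move=> c' Hc'; rewrite big_pred0 // => w'; by rewrite eq_sym (negbTE Hc').
Qed.

Lemma ev_pa_pb m : ev m (pa m) (pb m).
Proof. by case: m. Qed.

Lemma sum_ports m : \sum_(w : V m) ((w == pa m) + (w == pb m)) = 2.
Proof.
have Hab := pa_pb r' m.
rewrite big_split /= (bigD1 (pa m)) //= eqxx big1 ?addn0; last first.
  by move=> w /negbTE ->.
rewrite (bigD1 (pb m)) //= eqxx big1 ?addn0 //.
by move=> w /negbTE ->.
Qed.

Lemma lreach leaf l : reach (ladj leaf) l (LP false).
Proof.
have HP : forall s, reach (ladj leaf) (LP s) (LP false).
  by case; [apply: (@reach_edge _ _ _ (LP false)) => //; apply: reach_refl|apply: reach_refl].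
have HA : forall s i, reach (ladj leaf) (LA s i) (LP false).
  by move=> s i; apply: (@reach_edge _ _ _ (LP s)); rewrite /= ?eqxx.
have HX : forall s i, reach (ladj leaf) (LX s i) (LP false).
  by move=> s i; apply: (@reach_edge _ _ _ (LA s i)); rewrite /= ?eqxx.
case: l => [[[s|[s i]]|[s i]]|[s i]]; rewrite ?HP ?HA ?HX //.
by apply: (@reach_edge _ _ _ (LX (~~ s) i)); rewrite /= ?eqxx; case: s.
Qed.

Lemma ev_reach m u : reach (ev m) u (pa m).
Proof.
elim: m u => [|m IH] u; first exact: lreach.
have Hl : forall l, reach (ev m.+1) (inl l) (pa m.+1).
  move=> l; apply: (@reach_hom _ _ (ladj false) (ev m.+1) inl) => //.
  exact: lreach.
case: u => [l|[c w]]; first exact: Hl.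
apply: (@reach_trans _ _ _ (inr (c, pa m))).
  apply: (@reach_hom _ _ (ev m) (ev m.+1) (fun w => inr (c, w))) => //.
  by move=> u v H /=; rewrite eqxx.
apply: (@reach_edge _ _ _ (inl (LA c.1 c.2))); last exact: Hl.
by rewrite /= /crossadj eqxx.
Qed.

End Deg.

Section Top.
Variable r' : nat.
Local Notation r := r'.+1.
Local Notation K := (bool * 'I_r)%type.
Local Notation L := (bool + K + K + K)%type.
Local Notation pa := (@pa r').
Local Notation pb := (@pb r').
Local Notation ev m := (@ev r' m).
Local Notation cv := (@cv r').
Local Notation V := (V r').
Local Notation ladj leaf := (@ladj r' leaf).
Notation LP s := (inl (inl (inl s))).
Notation LA s i := (inl (inl (inr (s, i)))).
Notation LX s i := (inl (inr (s, i))).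
Notation LC s i := (inr (s, i)).

Variable h : nat.
Definition TT : finType := (bool * V h)%type.
Definition eT : rel TT := fun x y =>
  if x.1 == y.1 then ev h x.2 y.2
  else ((x.2 == pa h) && (y.2 == pa h)) || ((x.2 == pb h) && (y.2 == pb h)).
Definition colT (x : TT) : bool := x.1 (+) cv x.2.

Lemma eT_sym : symmetric eT.
Proof.
move=> [s u] [s' u']; rewrite /eT /= eq_sym.
by case: (s' == s); [exact: ev_sym | rewrite (andbC (u == _)) (andbC (u == pb h))].
Qed.

Lemma eT_irr : irreflexive eT.
Proof. by move=> [s u]; rewrite /eT /= eqxx ev_irr. Qed.

Lemma eT_col x y : eT x y -> colT x != colT y.
Proof.
case: x y => [s u] [s' u']; rewrite /eT /colT /=.
case: eqP => [->|/eqP Hs].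
  by move/ev_col; case: s'; case: (cv u); case: (cv u').
case/orP => /andP [/eqP -> /eqP ->]; rewrite ?cv_pa ?cv_pb;
  by move: Hs; case: s; case: s'.
Qed.

Lemma eT_reach x : reach eT x (false, pa h).
Proof.
case: x => s u.
have H1 : reach eT (s, u) (s, pa h).
  apply: (@reach_hom _ _ (ev h) eT (fun w => (s, w))); last exact: ev_reach.
  by move=> a b H; rewrite /eT /= eqxx.
apply: reach_trans H1 _; case: s; last exact: reach_refl.
apply: (@reach_edge _ _ _ (false, pa h)); last exact: reach_refl.
by rewrite /eT /= eqxx.
Qed.

Lemma eT_conn x y : exists k, y \in ball eT k x.
Proof.
apply: (reach_trans (eT_reach x)); apply: reach_sym; first exact: eT_sym.
exact: eT_reach.
Qed.

Lemma sum_join u :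
  \sum_(u' | ((u == pa h) && (u' == pa h)) || ((u == pb h) && (u' == pb h))) 1
  = (u == pa h) + (u == pb h).
Proof.
have Hab := pa_pb r' h.
case Ha: (u == pa h); case Hb: (u == pb h) => /=.
- by move: Hab; move/eqP: Ha => <-; rewrite Hb.
- by rewrite (eq_bigl (fun u' => u' == pa h)) ?big_pred1_eq // => u'; rewrite orbF.
- by rewrite (eq_bigl (fun u' => u' == pb h)) ?big_pred1_eq.
- by rewrite big_pred0.
Qed.

Lemma eT_deg x : \sum_(y | eT x y) 1 = r'.+3.
Proof.
case: x => s u.
rewrite sumP big_bool /eT /=.
by case: s => /=; rewrite sum_join -(ev_deg u) ?addnA // addnC addnA.
Qed.


Lemma sum_const_all (A : finType) c : \sum_(x : A) c = #|A| * c.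
Proof. by rewrite sum_nat_const. Qed.

Local Notation d := (dd eT_conn).
Definition cost (x y : TT) := #|TT| - absdiff (nG eT x y) (nG eT y x).
Definition region m (f : V m -> TT) : {set TT} := [set x in codom f].

Fixpoint Phi (m P : nat) : nat :=
  match m with
  | 0 => 2 * P * (r'.+3 * #|{: L}|)
  | m'.+1 => 2 * P * (r'.+3 * #|{: L}| + 2 * #|{: K}|) + #|{: K}| * Phi m' #|V m|
  end.

Lemma Phi_mono m P Q : P <= Q -> Phi m P <= Phi m Q.
Proof. move=> H; case: m => [|m] /=; last rewrite leq_add2r; by rewrite leq_mul2r leq_mul2l H !orbT. Qed.

Section HangHyp.
Variables (m : nat) (f : V m -> TT) (A2 B2 : TT) (P : {set TT}) (fl : bool).
Hypothesis Hind : forall u v, eT (f u) (f v) = ev m u v.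
Hypothesis Hcr : forall t v, t \notin codom f -> eT t (f v) ->
  (t = A2 /\ v = pa m) \/ (t = B2 /\ v = pb m).
Hypothesis HA2 : eT A2 (f (pa m)).
Hypothesis HfP : forall u, f u \in P.
Hypothesis HP : forall w, w \notin P -> d w A2 < d w B2.

Lemma Hcross_reg o r : o \notin region f -> r \in region f -> eT o r ->
  (o = A2 /\ r = f (pa m)) \/ (o = B2 /\ r = f (pb m)).
Proof.
rewrite !inE => Ho /codomP [v ->] He.
by case: (Hcr Ho He) => [[-> ->]|[-> ->]]; [left|right].
Qed.

Lemma edge_cost u v : ev m u v -> cost (f u) (f v) <= 2 * #|P|.
Proof.
move=> Huv.
apply: (@cost_hang _ _ eT_conn colT eT_col (region f) P (f (pa m)) (f (pb m)) A2 B2).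
- by rewrite Hind ev_pa_pb.
- exact: HA2.
- exact: Hcross_reg.
- by apply/subsetP => x; rewrite inE => /codomP [w ->]; apply: HfP.
- exact: HP.
- by rewrite inE codom_f.
- by rewrite inE codom_f.
- by rewrite Hind.
Qed.

Lemma sum_edge_cost u : \sum_(v | ev m u v) cost (f u) (f v) <= 2 * #|P| * r'.+3.
Proof.
apply: leq_trans (_ : \sum_(v | ev m u v) (2 * #|P| * 1) <= _).
  by apply: leq_sum => v Hv; rewrite muln1 edge_cost.
rewrite -big_distrr /= leq_mul2l; apply/orP; right.
by rewrite -(ev_deg u) -addnA leq_addr.
Qed.

End HangHyp.

Lemma Dfacts m (f : V m.+1 -> TT) fl
  (Hind : forall u v, eT (f u) (f v) = ev m.+1 u v)
  (Hcol : forall u, colT (f u) = fl (+) cv u) s i :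
  d (f (inl (LP s))) (f (inl (LA s i))) < d (f (inl (LP s))) (f (inl (LC s i))) /\
  d (f (inl (LP (~~ s)))) (f (inl (LA s i))) < d (f (inl (LP (~~ s)))) (f (inl (LC s i))).
Proof.
have E2 : eT (f (inl (LP (~~ s)))) (f (inl (LP s))) by rewrite Hind /=; case: (s).
have E1 : eT (f (inl (LP s))) (f (inl (LA s i))) by rewrite Hind /= eqxx.
have H1 := dd_edge eT_conn E1.
have H2 := dd_edge_tri eT_conn (f (inl (LA s i))) E2.
have H3 : 3 <= d (f (inl (LP (~~ s)))) (f (inl (LC s i))).
  apply: (dd_ge3 eT_conn eT_col); first by rewrite !Hcol /=; case: (s); case: (fl).
  by rewrite Hind.
have H4 := dd_edge_tri eT_conn (f (inl (LC s i))) E2.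
move: H1 H2 H3 H4.
move: (d (f (inl (LP s))) (f (inl (LA s i)))) (d (f (inl (LP (~~ s)))) (f (inl (LA s i))))
  (d (f (inl (LP (~~ s)))) (f (inl (LC s i)))) (d (f (inl (LP s))) (f (inl (LC s i)))).
move=> p1 p2 p3 p4; clear E1 E2 Hind Hcol; lia.
Qed.

Lemma card_region m (f : V m -> TT) : #|region f| <= #|V m|.
Proof. by rewrite /region cardsE; apply: leq_trans (card_size _) _; rewrite size_codom. Qed.

Lemma hang m : forall (f : V m -> TT) A2 B2 (P : {set TT}) fl,
  (forall u v, eT (f u) (f v) = ev m u v) ->
  (forall t v, t \notin codom f -> eT t (f v) ->
     (t = A2 /\ v = pa m) \/ (t = B2 /\ v = pb m)) ->
  eT A2 (f (pa m)) ->
  (forall u, colT (f u) = fl (+) cv u) ->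
  (forall u, f u \in P) ->
  (forall w, w \notin P -> d w A2 < d w B2) ->
  \sum_(u : V m) \sum_(v | ev m u v) cost (f u) (f v) <= Phi m #|P|.
Proof.
elim: m => [|m IH] f A2 B2 P fl Hind Hcr HA2 Hcol HfP HP.
  apply: leq_trans (_ : \sum_(u : V 0) (2 * #|P| * r'.+3) <= _).
    by apply: leq_sum => u _; apply: (sum_edge_cost Hind Hcr HA2 HfP HP).
  by rewrite sum_const_all /= mulnC [in X in _ <= X]mulnA.
rewrite big_sumType.
have Hl : \sum_(l : L) \sum_(v | ev m.+1 (inl l) v) cost (f (inl l)) (f v)
          <= #|{: L}| * (2 * #|P| * r'.+3).
  rewrite -sum_const_all; apply: leq_sum => l _.
  exact: (sum_edge_cost Hind Hcr HA2 HfP HP (inl l)).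
have Hc : forall c, \sum_(w : V m) \sum_(v | ev m.+1 (inr (c, w)) v) cost (f (inr (c, w))) (f v)
          <= 2 * #|P| * 2 + Phi m #|V m.+1|.
  move=> c.
  under eq_bigr => w _ do rewrite big_sumType /= sum_inner.
  rewrite big_split /=; apply: leq_add.
    apply: leq_trans (_ : \sum_(w : V m) (2 * #|P| * ((w == pa m) + (w == pb m))) <= _).
      apply: leq_sum => w _; rewrite -(crossadj_sum c w) big_distrr /=.
      apply: leq_sum => l Hl'; rewrite muln1.
      by apply: (edge_cost Hind Hcr HA2 HfP HP); rewrite /= Hl'.
    by rewrite -big_distrr /= sum_ports.
  apply: leq_trans (Phi_mono m (card_region f)).
  apply: (IH (fun w => f (inr (c, w))) (f (inl (LA c.1 c.2))) (f (inl (LC c.1 c.2)))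
             (region f) (fl (+) c.1)).
  - by move=> u v; rewrite Hind /= eqxx.
  - move=> t v Ht He; case: (boolP (t \in codom f)) => Htf.
      case/codomP: Htf => u Htu; subst t; move: He; rewrite Hind.
      case: u Ht => [l|[c' w']] Ht /=.
        rewrite /crossadj; case: ifP => [/eqP -> /eqP ->|_]; first by left.
        by case: ifP => [/eqP -> /eqP ->|_ //]; right.
      case/andP => /eqP Hc' _; subst c'.
      by move: Ht; rewrite (codom_f (fun w => f (inr (c, w))) w').
    by case: (Hcr _ _ Htf He) => [[_ H]|[_ H]]; discriminate.
  - by rewrite Hind /= /crossadj !eqxx.
  - by move=> u; rewrite Hcol /= addbA.
  - by move=> u; rewrite inE codom_f.
  - move=> w Hw; case: c => s i /=.
    have [Da Db] := Dfacts Hind Hcol s i.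
    have Hz : f (inl (LC s i)) \in region f by rewrite inE codom_f.
    case: s Da Db Hz => Da Db Hz.
      exact: (hang_D (a := f (pa m.+1)) (b := f (pb m.+1)) (Hcross_reg Hcr) Hz Db Da Hw).
    exact: (hang_D (a := f (pa m.+1)) (b := f (pb m.+1)) (Hcross_reg Hcr) Hz Da Db Hw).
rewrite sumP.
have X : \sum_(c : K) \sum_(w : V m) \sum_(v | ev m.+1 (inr (c, w)) v) cost (f (inr (c, w))) (f v)
  <= \sum_(c : K) (2 * #|P| * 2 + Phi m #|V m.+1|) by apply: leq_sum => c _; exact: Hc.
apply: leq_trans (leq_add Hl X) _.
rewrite sum_const_all /=.
move: #|{: L}| #|{: K}| #|P| (Phi m #|V m.+1|) => a b p q.
nia.
Qed.

Lemma total_cost : \sum_(x : TT) \sum_(y | eT x y) cost x y <= 2 * Phi h #|TT| + 4 * #|TT|.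
Proof.
rewrite sumP.
have Hs : forall s, \sum_(u : V h) \sum_(y | eT (s, u) y) cost (s, u) y <= Phi h #|TT| + 2 * #|TT|.
  move=> s.
  have E : forall u, \sum_(y | eT (s, u) y) cost (s, u) y =
      \sum_(u' | ev h u u') cost (s, u) (s, u') +
      \sum_(u' | ((u == pa h) && (u' == pa h)) || ((u == pb h) && (u' == pb h))) cost (s, u) (~~ s, u').
    move=> u; rewrite sumP big_bool /eT /=.
    by case: s => /=; rewrite // addnC.
  under eq_bigr => u _ do rewrite E.
  rewrite big_split /=; apply: leq_add.
    have -> : #|TT| = #|[set: TT]| by rewrite cardsT.
    apply: (hang (f := fun u => (s, u)) (A2 := (~~ s, pa h)) (B2 := (~~ s, pb h)) (fl := s)).
    - by move=> u v; rewrite /eT /= eqxx.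
    - move=> [s' u'] v Ht He.
      have Hs' : s' = ~~ s.
        case: (eqVneq s' s) => [Es|]; last by case: (s); case: (s').
        by move: Ht; rewrite Es (codom_f (fun u => (s, u)) u').
      subst s'; move: He; rewrite /eT /=; case: (s) => /=;
        by case/orP => /andP [/eqP -> /eqP ->]; [left|right].
    - by rewrite /eT /=; case: (s) => /=; rewrite eqxx.
    - by [].
    - by move=> u; rewrite inE.
    - by move=> w; rewrite inE.
  apply: leq_trans (_ : \sum_(u : V h) (#|TT| * ((u == pa h) + (u == pb h))) <= _).
    apply: leq_sum => u _; rewrite -sum_join big_distrr /=.
    by apply: leq_sum => u' _; rewrite muln1 /cost leq_subr.
  by rewrite -big_distrr /= sum_ports mulnC.
rewrite big_bool.
apply: leq_trans (leq_add (Hs true) (Hs false)) _.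
lia.
Qed.

End Top.

Section Transport.
Variables (T1 T2 : finType) (g : T1 -> T2) (g' : T2 -> T1).
Hypotheses (gK : cancel g g') (g'K : cancel g' g).
Variable e2 : rel T2.
Definition etr : rel T1 := fun x y => e2 (g x) (g y).

Lemma ball_tr k x y : (y \in ball etr k x) = (g y \in ball e2 k (g x)).
Proof.
elim: k y => [|k IH] y; first by rewrite !ball0 (inj_eq (can_inj gK)).
apply/idP/idP.
  move/ballSP => [H|[z Hz Hzy]]; first by apply: (ball_monoP (leqnSn k)); rewrite -IH.
  by apply: (ball_edge (y := g z)); rewrite -?IH.
move/ballSP => [H|[z Hz Hzy]]; first by apply: (ball_monoP (leqnSn k)); rewrite IH.
apply: (ball_edge (y := g' z)); first by rewrite IH g'K.
by rewrite /etr g'K.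
Qed.

Lemma card_tr : #|T1| = #|T2|.
Proof. by apply: bij_eq_card; exists g'. Qed.

Lemma dist_tr x y : dist etr x y = dist e2 (g x) (g y).
Proof.
rewrite /dist card_tr.
have -> : find (fun k => y \in ball etr k x) (iota 0 #|T2|) =
          find (fun k => g y \in ball e2 k (g x)) (iota 0 #|T2|).
  by apply: eq_find => k; rewrite ball_tr.
by [].
Qed.

Lemma nG_tr u v : nG etr u v = nG e2 (g u) (g v).
Proof.
rewrite /nG.
have -> : [set w | olt (dist etr w u) (dist etr w v)] =
          [set w | olt (dist e2 (g w) (g u)) (dist e2 (g w) (g v))].
  by apply/setP => w; rewrite !inE !dist_tr.
rewrite -(card_imset _ (can_inj gK)); apply: eq_card => z.
rewrite [in RHS]inE; apply/imsetP/idP.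
  by move=> [w]; rewrite inE => H ->.
by move=> H; exists (g' z); rewrite ?inE g'K.
Qed.

Lemma sum_tr (G : T2 -> T2 -> nat) :
  \sum_(i : T1) \sum_(j | etr i j) G (g i) (g j) = \sum_(x : T2) \sum_(y | e2 x y) G x y.
Proof.
rewrite [RHS](reindex g); last by apply: onW_bij; exists g'.
apply: eq_bigr => i _.
by rewrite [RHS](reindex g); last by apply: onW_bij; exists g'.
Qed.

End Transport.

Lemma nG_disj (T : finType) (e : rel T) x y : nG e x y + nG e y x <= #|T|.
Proof.
rewrite /nG -cardsUI.
have -> : [set w | olt (dist e w x) (dist e w y)] :&: [set w | olt (dist e w y) (dist e w x)] = set0.
  apply/setP => w; rewrite !inE.
  by case: (dist e w x) => [a|]; case: (dist e w y) => [b|] //=; apply/negP => /andP [H1 H2];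
     move: (ltn_trans H1 H2); rewrite ltnn.
by rewrite cards0 addn0 max_card.
Qed.

Lemma half_sum n (e : rel 'I_n) (F : 'I_n -> 'I_n -> nat) :
  symmetric e -> irreflexive e -> (forall u v, F u v = F v u) ->
  2 * \sum_(u : 'I_n) \sum_(v : 'I_n | (u < v) && e u v) F u v = \sum_u \sum_(v | e u v) F u v.
Proof.
move=> esym eirr FC.
have E : forall u : 'I_n, \sum_(v | e u v) F u v =
    \sum_(v : 'I_n | (u < v) && e u v) F u v + \sum_(v : 'I_n) (if (v < u) && e u v then F u v else 0).
  move=> u; rewrite big_mkcond [in RHS]big_mkcond -big_split /=.
  apply: eq_bigr => v _.
  case: (ltngtP u v) => H /=; rewrite ?addn0 ?add0n //.
  have Huv : u = v by apply: val_inj.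
  by rewrite Huv eirr.
rewrite (eq_bigr _ (fun u _ => E u)) big_split /= exchange_big /=.
rewrite mul2n -addnn; congr (_ + _).
apply: eq_bigr => u _; rewrite [LHS]big_mkcond; apply: eq_bigr => v _.
by rewrite esym FC.
Qed.

Lemma mostar2 n (e : rel 'I_n) : symmetric e -> irreflexive e ->
  2 * mostar e = \sum_u \sum_(v | e u v) absdiff (nG e u v) (nG e v u).
Proof.
move=> esym eirr; rewrite /mostar; apply: half_sum => // u v; exact: absdiffC.
Qed.

Section Final.
Variable r' : nat.
Local Notation r := r'.+1.
Local Notation K := (bool * 'I_r)%type.
Local Notation L := (bool + K + K + K)%type.
Local Notation V := (V r').

Lemma cardL : #|{: L}| = 6 * r' + 8.
Proof. by rewrite !card_sum !card_prod card_bool card_ord; lia. Qed.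
Lemma cardK : #|{: K}| = 2 * r.
Proof. by rewrite card_prod card_bool card_ord. Qed.
Lemma cardVS m : #|V m.+1| = #|{: L}| + #|{: K}| * #|V m|.
Proof. by rewrite /= card_sum card_prod. Qed.
Lemma cardV_L m : #|{: L}| <= #|V m|.
Proof. by case: m => [|m] //; rewrite cardVS leq_addr. Qed.
Lemma cardV_pow m : expn #|{: K}| m <= #|V m|.
Proof.
elim: m => [|m IH]; first by rewrite expn0; apply: (leq_trans _ (cardV_L 0)); rewrite cardL; lia.
rewrite cardVS expnS; apply: (leq_trans _ (leq_addl _ _)); by rewrite leq_mul2l IH orbT.
Qed.

Definition AA := r'.+3 * #|{: L}| + 2 * #|{: K}|.

Lemma Phi_bound m P : Phi r' m P <= 2 * AA * P + 2 * AA * m * #|V m.+1|.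
Proof.
elim: m P => [|m IH] P /=.
  rewrite /AA; move: #|{: L}| #|{: K}| #|V 1| => a b c; nia.
have H1 := IH #|V m.+1|.
have H2 : #|{: K}| * #|V m.+1| <= #|V m.+2| by rewrite (cardVS m.+1) leq_addl.
have H3 : #|{: K}| * Phi r' m #|V m.+1| <=
          #|{: K}| * (2 * AA * #|V m.+1| + 2 * AA * m * #|V m.+1|) by rewrite leq_mul2l H1 orbT.
have H4 : 2 * AA * m.+1 * (#|{: K}| * #|V m.+1|) <= 2 * AA * m.+1 * #|V m.+2|
  by rewrite leq_mul2l H2 orbT.
have HA : AA = r'.+3 * #|{: L}| + 2 * #|{: K}| by [].
move: (Phi r' m #|V m.+1|) AA #|{: K}| #|V m.+1| #|V m.+2| #|{: L}| HA H3 H4 => X a k n1 n2 l HA H3 H4.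
clear IH H1 H2; nia.
Qed.


Variable h : nat.
Local Notation TT := (TT r' h).
Definition Eh : rel 'I_#|TT| := etr enum_val (@eT r' h).

Lemma Eh_sym : symmetric Eh.
Proof. by move=> i j; rewrite /Eh /etr eT_sym. Qed.
Lemma Eh_irr : irreflexive Eh.
Proof. by move=> i; rewrite /Eh /etr eT_irr. Qed.

Lemma Eh_reg v : #|[set w | Eh v w]| = r'.+3.
Proof.
rewrite -sum1dep_card -(eT_deg (enum_val v)).
rewrite [RHS](reindex (fun i : 'I_#|TT| => enum_val i)); last first.
  by apply: onW_bij; exact: enum_val_bij.
by [].
Qed.

Definition QQ := 2 * AA + 2 + AA * (#|{: K}| + 1) * h.

Lemma main_nat : r'.+3 * #|TT| * #|TT| <= 2 * mostar Eh + 2 * #|TT| * QQ.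
Proof.
rewrite (mostar2 Eh_sym Eh_irr).
have Htr : \sum_i \sum_(j | Eh i j) absdiff (nG Eh i j) (nG Eh j i) =
           \sum_x \sum_(y | eT x y) absdiff (nG (@eT r' h) x y) (nG (@eT r' h) y x).
  rewrite -(sum_tr enum_valK enum_rankK (@eT r' h) (fun x y => absdiff (nG (@eT r' h) x y) (nG (@eT r' h) y x))).
  apply: eq_bigr => i _; apply: eq_bigr => j _.
  by rewrite /Eh !(nG_tr enum_valK enum_rankK).
rewrite Htr.
have Hsplit : \sum_(x : TT) \sum_(y | eT x y) absdiff (nG (@eT r' h) x y) (nG (@eT r' h) y x)
    + \sum_(x : TT) \sum_(y | eT x y) cost x y = #|TT| * (#|TT| * r'.+3).
  rewrite -big_split /= -sum_const_all; apply: eq_bigr => x _.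
  rewrite -big_split /=.
  rewrite (eq_bigr (fun _ => #|TT| * 1)); last first.
    move=> y _; rewrite muln1 /cost subnKC //.
    apply: (leq_trans _ (nG_disj (@eT r' h) x y)); rewrite /absdiff; move: (nG (@eT r' h) x y) (nG (@eT r' h) y x) => p q; lia.
  by rewrite -big_distrr /= eT_deg.
have Hc := total_cost r' h.
have Hp := Phi_bound h #|TT|.
have HN1 : #|V h.+1| <= (#|{: K}| + 1) * #|V h|.
  by rewrite cardVS mulnDl mul1n addnC leq_add2l cardV_L.
have Hn : #|TT| = 2 * #|V h| by rewrite card_prod card_bool.
have H5 : 2 * AA * h * #|V h.+1| <= 2 * AA * h * ((#|{: K}| + 1) * #|V h|)
  by rewrite leq_mul2l HN1 orbT.
rewrite /QQ.
move: Hsplit Hc Hp H5 Hn.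
move: (\sum_(x : TT) \sum_(y | eT x y) absdiff (nG (@eT r' h) x y) (nG (@eT r' h) y x))
      (\sum_(x : TT) \sum_(y | eT x y) cost x y) (Phi r' h #|TT|) #|TT| #|V h| #|V h.+1| AA #|{: K}|
  => S1 S2 F n N N1 a k.
move=> ? ? ? ? ?; nia.
Qed.

End Final.

Lemma QQ_bound r' h : 1 <= h ->
  QQ r' h + 24 * r'.+3 * h <= (20 * r'.+3 * r'.+3 * r'.+3 + 12 * r'.+3 * r'.+3 + 48) * h.
Proof.
move=> Hh; rewrite /QQ /AA cardL cardK.
set a := 2 * ((r'.+3) * (6 * r' + 8) + 2 * (2 * r'.+1)) + 2.
set b := ((r'.+3) * (6 * r' + 8) + 2 * (2 * r'.+1)) * (2 * r'.+1 + 1).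
set c := 24 * r'.+3.
set C := 20 * r'.+3 * r'.+3 * r'.+3 + 12 * r'.+3 * r'.+3 + 48.
have P : a + b + c <= C by rewrite /a /b /c /C; nia.
clearbody a b c C; nia.
Qed.

Lemma n_pow r' h : 0 < h -> expn r'.+2 h <= #|TT r' h|.
Proof.
move=> Hh; rewrite card_prod card_bool.
apply: (@leq_trans #|V r' h|); last by rewrite mul2n -addnn leq_addl.
apply: (leq_trans _ (cardV_pow r' h)); rewrite leq_exp2r // cardK; lia.
Qed.

Lemma powE m k : Nat.pow m k = expn m k.
Proof. by elim: k => [|k IH] //=; rewrite expnS -IH. Qed.

Lemma ln_le_ (x y : R) : (0 < x -> x <= y -> ln x <= ln y)%R.
Proof.
move=> Hx Hxy; case: (Rle_lt_or_eq_dec _ _ Hxy) => [H|<-]; last exact: Rle_refl.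
by apply: Rlt_le; apply: ln_increasing.
Qed.

Theorem theorem1 :
  forall n0 Delta : nat, 3 <= n0 -> 3 <= Delta ->
  exists (n : nat) (e : rel 'I_n),
    n0 <= n /\ simple_graph e /\ regular e Delta /\
    (INR (mostar e) >=
       INR Delta / 2 * INR n ^ 2
       - (20 * INR Delta ^ 3 + 12 * INR Delta ^ 2 - 24 * INR Delta + 48)
         * INR n * (ln (INR n) / ln (INR (Delta - 1))))%R.
Proof.
move=> n0 Delta Hn0 HD.
have [r' ->] : exists r', Delta = r'.+3 by exists (Delta - 3); lia.
have Hh : 0 < n0 by lia.
exists #|TT r' n0|, (@Eh r' n0).
split; [|split; [|split]].
- apply: leq_trans (n_pow r' Hh); apply: ltnW; apply: ltn_expl; lia.
- by split; [exact: Eh_sym | exact: Eh_irr].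
- by move=> v; exact: Eh_reg.
have HM := main_nat r' n0.
have HQ := QQ_bound r' Hh.
have Hp := n_pow r' Hh.
rewrite (_ : r'.+3 - 1 = r'.+2); last by rewrite subn1.
move: HM HQ Hp; move: (mostar (@Eh r' n0)) => M; move: (QQ r' n0) => Q.
move: #|TT r' n0| => n HM HQ Hp.
have I2 : INR 2 = 2%R by rewrite INR_IZR_INZ.
have I20 : INR 20 = 20%R by rewrite INR_IZR_INZ.
have I12 : INR 12 = 12%R by rewrite INR_IZR_INZ.
have I24 : INR 24 = 24%R by rewrite INR_IZR_INZ.
have I48 : INR 48 = 48%R by rewrite INR_IZR_INZ.
have HMr : (INR r'.+3 * INR n * INR n <= INR 2 * INR M + INR 2 * INR n * INR Q)%R.
  by rewrite -!mult_INR -plus_INR; apply: le_INR; apply/leP.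
have HQr : (INR Q + INR 24 * INR r'.+3 * INR n0 <=
    (INR 20 * INR r'.+3 * INR r'.+3 * INR r'.+3 + INR 12 * INR r'.+3 * INR r'.+3 + INR 48) * INR n0)%R.
  by rewrite -!mult_INR -!plus_INR -mult_INR; apply: le_INR; apply/leP.
rewrite I2 in HMr; rewrite I20 I12 I24 I48 in HQr.
have HD2 : (2 <= INR r'.+2)%R.
  have := le_INR 2 r'.+2; rewrite (_ : INR 2 = 2%R); last by rewrite INR_IZR_INZ.
  by move=> H; apply: H; apply/leP.
have HD3 : (INR r'.+3 = INR r'.+2 + 1)%R by rewrite S_INR.
have Hlb : (0 < ln (INR r'.+2))%R.
  rewrite -ln_1; apply: ln_increasing; lra.
have Hpr : (INR r'.+2 ^ n0 <= INR n)%R by rewrite -pow_INR; apply: le_INR; apply/leP; rewrite powE.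
have Hlog : (INR n0 <= ln (INR n) / ln (INR r'.+2))%R.
  have H1 : (INR n0 * ln (INR r'.+2) <= ln (INR n))%R.
    rewrite -ln_pow; last lra.
    apply: ln_le_ => //; apply: pow_lt; lra.
  apply: (Rmult_le_reg_r (ln (INR r'.+2))) => //.
  rewrite /Rdiv Rmult_assoc Rinv_l; lra.
set Lg := (ln (INR n) / ln (INR r'.+2))%R.
set D := INR r'.+3.
set C := (20 * D ^ 3 + 12 * D ^ 2 - 24 * D + 48)%R.
have HC : (INR Q <= C * INR n0)%R.
  rewrite /C; have -> : (D ^ 3 = D * D * D)%R by ring.
  have -> : (D ^ 2 = D * D)%R by ring.
  rewrite /D; lra.
have HC0 : (0 <= C)%R.
  rewrite /C /D; have -> : (INR r'.+3 ^ 3 = INR r'.+3 * INR r'.+3 * INR r'.+3)%R by ring.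
  have -> : (INR r'.+3 ^ 2 = INR r'.+3 * INR r'.+3)%R by ring.
  nra.
have Hnn : (0 <= INR n)%R by apply: pos_INR.
have H1 : (INR n * INR Q <= INR n * (C * Lg))%R.
  apply: Rmult_le_compat_l => //.
  apply: Rle_trans HC _; apply: Rmult_le_compat_l => //.
apply: Rle_ge.
have -> : (INR n ^ 2 = INR n * INR n)%R by ring.
have -> : (C * INR n * Lg = INR n * (C * Lg))%R by ring.
rewrite /D in HMr *; lra.
Qed.
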